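(* Let $G$ be a connected graph with $13$ vertices. Suppose one of the following holds: (1) $\Delta(G)=12$ and $e(G)=13+k$ for some $1\le k\le 10$; (2) $\Delta(G)=11$ and $e(G)=13+k$ for some $5\le k\le 10$; (3) $\Delta(G)=10$ and $e(G)=13+k$ for some $8\le k\le 10$. Then $R(G)>\sqrt{12}+\frac{2(k+1)}{13\sqrt{12}}$.
   Context: All graphs are finite and simple; $e(G)$ is the number of edges and $\Delta(G)$ the maximum degree. For a vertex $u$, $d(u)$ is its degree. The Randić index is $R(G)=\sum_{\{u,v\}\in E(G)} \frac{1}{\sqrt{d(u)d(v)}}$. *)

(* Defs.v *)
From HB Require Import structures.
From mathcomp Require Import all_boot all_order all_algebra.
Set Implicit Arguments. Unset Strict Implicit. Unset Printing Implicit Defensive.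
Import Order.TTheory GRing.Theory Num.Theory.

Section Graphs.
Variable n : nat.
Implicit Types (e : rel 'I_n).

Definition simple_graph e := symmetric e /\ irreflexive e.

Definition connected_graph e := forall x y : 'I_n, connect e x y.

Definition deg e (u : 'I_n) : nat := #|[set v | e u v]|.

Definition maxdeg e : nat := \max_(u : 'I_n) deg e u.

(* edge set: unordered pairs {u,v} represented as (u,v) with u < v *)
Definition edge_set e : {set 'I_n * 'I_n} :=
  [set p : 'I_n * 'I_n | e p.1 p.2 && (p.1 < p.2)%N].

Definition num_edges e : nat := #|edge_set e|.

Definition randic (R : rcfType) e : R :=
  \sum_(p in edge_set e) (Num.sqrt ((deg e p.1 * deg e p.2)%:R))^-1.
End Graphs.

(* Main.v *)
Require Import Defs.
From HB Require Import structures.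
From mathcomp Require Import all_boot all_order all_algebra.
From mathcomp Require Import ring lra.
Import Order.TTheory GRing.Theory Num.Theory.
Local Open Scope ring_scope.

Lemma deg_ge1 (e : rel 'I_13) u : connected_graph e -> (0 < deg e u)%N.
Proof.
move=> con.
pose v : 'I_13 := if u == ord0 then ord_max else ord0.
have uv : u != v by rewrite /v; case: ifP => [/eqP -> | /negbT h].
case/connectP: (con u v) => [[|z p]] /=.
  by move=> _ E; rewrite E eqxx in uv.
case/andP=> euz _ _.
rewrite /deg card_gt0; apply/set0Pn; exists z; by rewrite inE.
Qed.

Lemma deg_le (e : rel 'I_13) u : (deg e u <= maxdeg e)%N.
Proof. rewrite /maxdeg; exact: (@leq_bigmax _ (fun u => deg e u) u). Qed.

Lemma chord (R : rcfType) (s t : R) : 1 <= s -> s <= t ->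
  1 + (s ^+ 2 - 1) / (t + 1) <= s.
Proof.
move=> h1 h2.
rewrite -lerBrDl ler_pdivrMr; last by lra.
nra.
Qed.

Lemma edge_term (R : rcfType) (a b y : R) : y <= a -> y <= b ->
  y * (a + b) - y ^+ 2 <= a * b.
Proof. move=> ha hb; nra. Qed.
Lemma edge_double (R : numDomainType) n (e : rel 'I_n) (f : 'I_n -> R) :
  simple_graph e ->
  \sum_(p in edge_set e) (f p.1 + f p.2) = \sum_u (deg e u)%:R * f u.
Proof.
case=> esym eirr.
rewrite big_split /=.
have -> : \sum_(p in edge_set e) f p.2 =
          \sum_(p | e p.1 p.2 && (p.2 < p.1)%N) f p.1.
  rewrite (reindex_inj (h := fun p : 'I_n * 'I_n => (p.2, p.1))); last first.
    by case=> a b [c d] /= [-> ->].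
  apply: eq_bigl => -[a b] /=; rewrite inE /= esym.
  by [].
have -> : \sum_(p in edge_set e) f p.1 =
          \sum_(p | e p.1 p.2 && (p.1 < p.2)%N) f p.1.
  by apply: eq_bigl => p; rewrite inE.
have -> : \sum_u (deg e u)%:R * f u = \sum_(p | e p.1 p.2) f p.1.
  rewrite -(pair_big_dep xpredT (fun i j => e i j) (fun i j => f i)) /=.
  apply: eq_bigr => u _.
  rewrite /deg.
  rewrite [RHS](eq_bigl (fun v => v \in [set v | e u v])); last by move=> v; rewrite inE.
  by rewrite sumr_const mulr_natl.
rewrite [in RHS](bigID (fun p : 'I_n * 'I_n => (p.1 < p.2)%N)) /=.
congr (_ + _); apply: eq_bigl => -[a b] /=.
case Eab: (e a b) => //=.
have nab : (a != b :> nat).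
  by apply/eqP => /val_inj E; rewrite E eirr in Eab.
by rewrite ltnNge leq_eqVlt negb_or nab.
Qed.

Arguments edge_double {R n e} f.

Lemma main_bound (R : rcfType) (e : rel 'I_13) :
  simple_graph e -> connected_graph e ->
  (Num.sqrt ((maxdeg e)%:R : R))^-1 * (13 + ((2 * num_edges e)%:R - 13) / (Num.sqrt ((maxdeg e)%:R : R) + 1))
    - (num_edges e)%:R * (Num.sqrt ((maxdeg e)%:R : R))^-1 ^+ 2 <= randic R e.
Proof.
move=> sg con; set t := Num.sqrt _.
set D := maxdeg e; set m := num_edges e.
have Dpos : (0 < D)%N := leq_trans (@deg_ge1 e ord0 con) (deg_le e ord0).
have tpos : 0 < t by rewrite sqrtr_gt0 ltr0n.
pose s u := Num.sqrt ((deg e u)%:R : R).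
have s1 u : 1 <= s u by rewrite -sqrtr1 ler_sqrt // ler1n deg_ge1.
have st u : s u <= t by rewrite ler_sqrt // ler_nat deg_le.
have spos u : 0 < s u by apply: lt_le_trans (s1 u); lra.
have Xy u : t^-1 <= (s u)^-1 by rewrite lef_pV2 ?posrE.
have -> : randic R e = \sum_(p in edge_set e) (s p.1)^-1 * (s p.2)^-1.
  by rewrite /randic; apply: eq_bigr => p _; rewrite natrM sqrtrM ?ler0n // invfM.
have hs : \sum_(p in edge_set e) ((s p.1)^-1 + (s p.2)^-1) = \sum_u s u.
  rewrite (edge_double (fun u => (s u)^-1)) //; apply: eq_bigr => u _.
  have := spos u; rewrite -(sqr_sqrtr (ler0n R (deg e u))) -/(s u) => h.
  by rewrite expr2 -mulrA divff ?mulr1 // gt_eqF.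
have hd : (2 * m)%:R = \sum_u ((s u) ^+ 2).
  have := edge_double (fun _ => (1:R)) sg.
  rewrite sumr_const -/m => h.
  have e2 : (2 * m)%:R = (1 + 1 : R) *+ m by rewrite -mulr_natl natrM; ring.
  rewrite e2 h; apply: eq_bigr => u _.
  by rewrite mulr1 sqr_sqrtr ?ler0n.
have H : \sum_(p in edge_set e) (t^-1 * ((s p.1)^-1 + (s p.2)^-1) - t^-1 ^+ 2)
   <= \sum_(p in edge_set e) (s p.1)^-1 * (s p.2)^-1.
  by apply: ler_sum => p _; apply: edge_term.
apply: (le_trans _ H).
rewrite big_split /= -mulr_sumr hs sumrN sumr_const.
change #|edge_set e| with m.
rewrite -[t^-1 ^+ 2 *+ m]mulr_natl.
rewrite lerD2r ler_pM2l ?invr_gt0 //.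
have H2 : \sum_u (1 + (s u ^+ 2 - 1) / (t + 1)) <= \sum_u s u.
  by apply: ler_sum => u _; apply: chord.
apply: (le_trans _ H2).
rewrite big_split /= sumr_const card_ord -mulr_suml sumrB sumr_const card_ord -hd.
exact: lexx.
Qed.

Lemma finish (R : rcfType) (Dn : nat) (tU qL qU a b c kr : R) :
  Dn%:R <= tU ^+ 2 -> 0 < tU -> qL ^+ 2 <= 12 -> 12 <= qU ^+ 2 -> 0 < qL -> 0 < qU ->
  0 <= kr -> (0 < Dn)%N ->
  0 <= a -> a * tU <= 1 -> 0 <= b -> b * (tU + 1) <= 1 -> 1 <= c * qL ->
  qU + 2 * (kr + 1) / 13 * c < 13 * a + (13 + 2 * kr) * (a * b) - (13 + kr) / Dn%:R ->
  Num.sqrt 12 + 2 * (kr + 1) / (13 * Num.sqrt 12) <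
  (Num.sqrt Dn%:R)^-1 * (13 + (2 * (13 + kr) - 13) / (Num.sqrt Dn%:R + 1))
    - (13 + kr) * (Num.sqrt Dn%:R)^-1 ^+ 2.
Proof.
move=> hD htU hqL hqU qL0 qU0 k0 Dpos a0 ha b0 hb hc H.
set t := Num.sqrt Dn%:R; set q := Num.sqrt 12.
have t0 : 0 < t by rewrite sqrtr_gt0 ltr0n.
have q0 : 0 < q by rewrite sqrtr_gt0.
have t2 : t ^+ 2 = Dn%:R by rewrite sqr_sqrtr ?ler0n.
have q2 : q ^+ 2 = 12 by rewrite sqr_sqrtr.
have ttU : t <= tU by nra.
have qLq : qL <= q by nra.
have qqU : q <= qU by nra.
have ti : t * t^-1 = 1 by rewrite divff // gt_eqF.
have ti0 : 0 < t^-1 by rewrite invr_gt0.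
have t1i : (t + 1) * (t + 1)^-1 = 1 by rewrite divff //; apply: lt0r_neq0; lra.
have t1i0 : 0 < (t + 1)^-1 by rewrite invr_gt0; lra.
have qi : q * q^-1 = 1 by rewrite divff // gt_eqF.
have qi0 : 0 < q^-1 by rewrite invr_gt0.
have y1 : a <= t^-1 by nra.
have w1 : b <= (t + 1)^-1 by nra.
have z1 : q^-1 <= c by nra.
have yw : a * b <= t^-1 * (t + 1)^-1 by nra.
have y2 : t^-1 ^+ 2 = Dn%:R^-1 by rewrite exprVn t2.
have c0 : 0 <= 13 + 2 * kr by lra.
have yw' := ler_wpM2l c0 yw.
have kz : 2 * (kr + 1) / 13 * q^-1 <= 2 * (kr + 1) / 13 * c by apply: ler_wpM2l => //; lra.
have E1 : 2 * (kr + 1) / (13 * q) = 2 * (kr + 1) / 13 * q^-1 by rewrite invfM mulrA.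
rewrite E1 y2.
have -> : t^-1 * (13 + (2 * (13 + kr) - 13) / (t + 1)) = 13 * t^-1 + (13 + 2 * kr) * (t^-1 * (t + 1)^-1) by ring.
lra.
Qed.

Theorem lemma3p7 (R : rcfType) (e : rel 'I_13) (k : nat) :
  simple_graph e -> connected_graph e ->
  [\/ (maxdeg e = 12 /\ 1 <= k <= 10)%N,
      (maxdeg e = 11 /\ 5 <= k <= 10)%N
    | (maxdeg e = 10 /\ 8 <= k <= 10)%N] ->
  num_edges e = (13 + k)%N ->
  Num.sqrt (12 : R) + (2 * (k.+1)%:R) / (13 * Num.sqrt 12) < randic R e.
Proof.
move=> sg con hc hm.
apply: (lt_le_trans _ (main_bound R e sg con)).
have e1 : (k.+1)%:R = k%:R + 1 :> R by rewrite -addn1 natrD.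
have e2 : ((2 * (13 + k))%:R : R) = 2 * (13 + k%:R) by rewrite natrM natrD.
have e3 : ((13 + k)%:R : R) = 13 + k%:R by rewrite natrD.
rewrite hm e1 e2 e3.
have k0 : 0 <= (k%:R : R) by rewrite ler0n.
case: hc => -[-> /andP[h1 h2]].
- have k1 : 1 <= (k%:R : R) by rewrite ler1n.
  have k2 : (k%:R : R) <= 10 by rewrite (ler_nat R k 10).
  apply: (@finish R 12 (1351/390) (627/181) (1351/390) (390/1351) (390/1741) (181/627)) => //; lra.
- have k1 : 5 <= (k%:R : R) by rewrite (ler_nat R 5 k).
  have k2 : (k%:R : R) <= 10 by rewrite (ler_nat R k 10).
  apply: (@finish R 11 (199/60) (627/181) (1351/390) (60/199) (60/259) (181/627)) => //; lra.
- have k1 : 8 <= (k%:R : R) by rewrite (ler_nat R 8 k).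
  have k2 : (k%:R : R) <= 10 by rewrite (ler_nat R k 10).
  apply: (@finish R 10 (19/6) (627/181) (1351/390) (6/19) (6/25) (181/627)) => //; lra.
Qed.
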